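(* The elements $\mathsf{F}_{[t]}$, where $t$ runs over the set of unlabeled rooted trees, form a basis of the vector space $H_{\operatorname{NAP}}$.
   Context: $\Pi_{\operatorname{NAP}}(I)$ is the set of forests of rooted trees with vertex set exactly $I$, ordered by: $y$ covers $x$ iff $y$ is obtained from $x$ by adding an edge from the root of one component of $x$ to the root of another component (the latter root remaining the root); $\widehat{0}$ is the forest of one-vertex trees. For a rooted tree $t$ on $I$, $[\widehat{0},t]$ is an interval in $\Pi_{\operatorname{NAP}}(I)$, whose isomorphism class depends only on the unlabeled tree underlying $t$. $H_{\operatorname{NAP}}$ is the incidence Hopf algebra (Schmitt's construction) of this family: it has a basis $\mathsf{F}_{[Q]}$ indexed by isomorphism classes of finite products $Q$ of posets $[\widehat{0},t]$ ($t$ rooted trees), product $\mathsf{F}_{[Q]}\mathsf{F}_{[Q']}=\mathsf{F}_{[Q\times Q']}$, unit the class of the one-element poset, coproduct $\Delta\mathsf{F}_{[Q]}=\sum_{x\in Q}\mathsf{F}_{[\widehat{0},x]}\otimes\mathsf{F}_{[x,\widehat{1}]}$. We write $\mathsf{F}_{[t]}=\mathsf{F}_{[[\widehat{0},t]]}$. *)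

(* Defs.v *)
From HB Require Import structures.
From mathcomp Require Import all_boot all_order all_algebra.
Set Implicit Arguments. Unset Strict Implicit. Unset Printing Implicit Defensive.
Import GRing.Theory.

(* A rooted forest with vertex set 'I_n is encoded by its parent map:
   [x i = None] iff i is a root, [x i = Some j] iff j is the parent of i. *)
Definition parent_fun (n : nat) := {ffun 'I_n -> option 'I_n}.

(* no cycles: following parents from any vertex reaches a root within n steps *)
Definition is_forest n (x : parent_fun n) : bool :=
  [forall i, iter n (fun o => obind (fun j => x j) o) (Some i) == None].

Definition is_root n (x : parent_fun n) (r : 'I_n) : bool := x r == None.

Definition is_tree n (x : parent_fun n) : bool :=
  is_forest x && (#|[pred r | is_root x r]| == 1).

Definition fzero n : parent_fun n := [ffun _ => None].

Definition graft n (x : parent_fun n) (r1 r2 : 'I_n) : parent_fun n :=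
  [ffun i => if i == r1 then Some r2 else x i].

Definition nap_cover n (x y : parent_fun n) : bool :=
  [exists r1, exists r2,
     [&& r1 != r2, is_root x r1, is_root x r2 & y == graft x r1 r2]].

Definition nap_le n : rel (parent_fun n) := connect (@nap_cover n).

Record rtree := RTree {
  rt_size : nat;
  rt_par : parent_fun rt_size;
  rt_isTree : is_tree rt_par }.

(* isomorphism of rooted trees (so unlabeled trees = iso classes) *)
Definition tree_iso (t u : rtree) : Prop :=
  exists g : 'I_(rt_size t) -> 'I_(rt_size u),
    bijective g /\ forall i, rt_par u (g i) = omap g (rt_par t i).

Record fposet := FPoset { fp_car : finType; fp_le : rel fp_car }.

Definition fp_iso (P Q : fposet) : Prop :=
  exists f : fp_car P -> fp_car Q,
    bijective f /\ forall x y, fp_le x y = fp_le (f x) (f y).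

Definition int_car (t : rtree) : finType :=
  {x : parent_fun (rt_size t) |
     [&& is_forest x, nap_le (fzero _) x & nap_le x (rt_par t)]}.

Definition fp_int (t : rtree) : fposet :=
  @FPoset (int_car t) (fun x y => nap_le (val x) (val y)).

Definition fp_prod (P Q : fposet) : fposet :=
  @FPoset (fp_car P * fp_car Q)%type
    (fun x y => fp_le x.1 y.1 && fp_le x.2 y.2).

Definition fp_one : fposet := @FPoset unit (fun _ _ => true).

Definition prodQ (s : seq rtree) : fposet :=
  foldr (fun t P => fp_prod (fp_int t) P) fp_one s.

(* Main.v *)
Require Import Defs.
From HB Require Import structures.
From mathcomp Require Import all_boot all_order all_algebra.
Set Implicit Arguments. Unset Strict Implicit. Unset Printing Implicit Defensive.
Section Basics.
Variable n : nat.
Implicit Types x y z : parent_fun n.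

Definition step x (o : option 'I_n) := obind (fun j => x j) o.

Lemma forestE x : is_forest x = [forall i, iter n (step x) (Some i) == None].
Proof. by []. Qed.

Lemma iter_None x k : iter k (step x) None = None.
Proof. by elim: k => //= k ->. Qed.

Lemma itS x k v : iter k.+1 (step x) (Some v) = iter k (step x) (x v).
Proof. by rewrite iterSr. Qed.

Lemma forest_ge x k v : is_forest x -> n <= k -> iter k (step x) (Some v) = None.
Proof.
move=> /forallP /(_ v) /eqP Hv Hk.
by rewrite -(subnK Hk) iterD Hv iter_None.
Qed.

Lemma forest_lt x k v w : is_forest x -> iter k (step x) (Some v) = Some w -> k < n.
Proof.
move=> Hf Hk; rewrite ltnNge; apply/negP => Hle.
by rewrite forest_ge in Hk.
Qed.

Lemma acyc x k v : is_forest x -> iter k.+1 (step x) (Some v) = Some v -> False.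
Proof.
move=> Hf Hk.
have H : forall m, iter (k.+1 * m) (step x) (Some v) = Some v.
  by elim=> [|m IH]; rewrite ?muln0 // mulnS iterD IH.
have := H n; rewrite forest_ge //; last by rewrite leq_pmull.
Qed.

Definition subpf y x := forall i, y i = None \/ y i = x i.

Lemma sub_iter y x k v w : subpf y x ->
  iter k (step y) (Some v) = Some w -> iter k (step x) (Some v) = Some w.
Proof.
move=> Hs; elim: k v => [//|k IH] v.
rewrite !itS; case Hy: (y v) => [v'|]; last by rewrite iter_None.
have [H|H] := Hs v; first by rewrite H in Hy.
by rewrite -H Hy; apply: IH.
Qed.

Lemma sub_forest y x : subpf y x -> is_forest x -> is_forest y.
Proof.
move=> Hs Hf; apply/forallP => i; apply/eqP.
case Hi: (iter n (step y) (Some i)) => [w|//].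
by move/forallP: Hf => /(_ i) /eqP; rewrite (sub_iter Hs Hi).
Qed.

Lemma descent z c : is_forest z -> z c != None ->
  exists b a, [/\ exists k, iter k (step z) (Some c) = Some b, z b = Some a & z a = None].
Proof.
move=> Hf Hc.
have exP : exists k, iter k (step z) (Some c) == None.
  by exists n; rewrite forest_ge.
have [m Hm Hmin] := ex_minnP exP.
case: m Hm Hmin => [//|[|k]] Hm Hmin; first by rewrite /= (negbTE Hc) in Hm.
have Hk1 : iter k.+1 (step z) (Some c) != None.
  apply/negP => H; have := Hmin _ H; by rewrite ltnn.
have Hk0 : iter k (step z) (Some c) != None.
  apply/negP => H; have := Hmin _ H; by rewrite ltnNge leqnSn.
case Eb: (iter k (step z) (Some c)) Hk0 => [b|//] _.
case Ea: (iter k.+1 (step z) (Some c)) Hk1 => [a|//] _.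
exists b, a; split; first by exists k.
  by rewrite iterS Eb in Ea.
by move: Hm; rewrite iterS Ea => /eqP.
Qed.

Definition Rel y z := subpf y z /\ (forall c p, y c = None -> z c = Some p -> y p = None).

Lemma Rel_refl y : Rel y y.
Proof. by split=> [i|c p ->]; [right|]. Qed.

Lemma Rel_trans y a z : Rel y a -> Rel a z -> Rel y z.
Proof.
move=> [H1 H2] [H3 H4]; split.
  move=> i; case: (H1 i) => [->|E]; first by left.
  case: (H3 i) => E2; last by right; rewrite E E2.
  by left; rewrite E E2.
move=> c p Hc Hz.
case Ea: (a c) => [q|].
  case: (H3 c) => E; first by rewrite E in Ea.
  by apply: (H2 c); rewrite // E.
have Hp := H4 c p Ea Hz.
by case: (H1 p) => ->.
Qed.

Lemma cover_Rel y a : nap_cover y a -> Rel y a.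
Proof.
case/existsP => r1 /existsP [r2 /and4P [Hne Hr1 Hr2 /eqP ->]].
split.
  move=> i; rewrite ffunE; case: eqP => [->|_]; last by right.
  by left; apply/eqP.
move=> c p Hc; rewrite ffunE; case: eqP => [_ [<-]|_]; first by apply/eqP.
by rewrite Hc.
Qed.

Lemma le_Rel y z : nap_le y z -> Rel y z.
Proof.
case/connectP => p Hp ->.
elim: p y Hp => [|a p IH] y /=; first by move=> _; apply: Rel_refl.
case/andP => Hc Hp; apply: Rel_trans (cover_Rel Hc) (IH _ Hp).
Qed.

Lemma Rel_le_aux N : forall y z, is_forest z ->
  #|[set i | y i != z i]| <= N -> Rel y z -> nap_le y z.
Proof.
elim: N => [|N IH] y z Hf HN HR.
  have -> : y = z; last by apply: connect0.
  apply/ffunP => i; apply/eqP; apply: contraTT HN => Hi.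
  by rewrite -ltnNge card_gt0; apply/set0Pn; exists i; rewrite inE.
case: (altP (y =P z)) => [->|Hne]; first by apply: connect0.
have [i Hi] : exists i, y i != z i.
  by apply/existsP; apply: contraNT Hne => /existsPn H; apply/eqP/ffunP => i; apply/eqP; have := H i; rewrite negbK.
have Hyi : y i = None.
  by case: (HR.1 i) => [//|E]; rewrite E eqxx in Hi.
have Hzi : z i != None by apply: contra Hi => /eqP ->; rewrite Hyi.
have [b [a [[k Hk] Hb Ha]]] := descent Hf Hzi.
have Hanc : forall k w, iter k (step z) (Some i) = Some w -> z w != None -> y w = None.
  elim=> [w [<-]//|k' IHk w].
  rewrite iterS; case E: (iter k' (step z) (Some i)) => [w'|//] /= Hw' _.
  apply: (HR.2 w') => //; apply: IHk E _; by rewrite Hw'.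
have Hyb : y b = None by apply: Hanc Hk _; rewrite Hb.
have Hya : y a = None by apply: (HR.2 b).
have Hab : a != b by apply/eqP => E; rewrite E Hb in Ha.
set w := [ffun j => if j == b then None else z j].
have Hsw : subpf w z by move=> j; rewrite /w ffunE; case: eqP => _; [left|right].
have HRw : Rel y w.
  split.
    move=> j; rewrite /w ffunE; case: eqP => [->|_]; first by left.
    exact: HR.1.
  move=> c p Hc; rewrite /w ffunE; case: eqP => // _; exact: HR.2.
have Hlt : #|[set j | y j != w j]| < #|[set j | y j != z j]|.
  apply: proper_card; apply/properP; split.
    apply/subsetP => j; rewrite !inE /w ffunE; case: ifP => [/eqP->|//].
    by rewrite Hyb.
  by exists b; rewrite !inE /w ?ffunE ?eqxx ?Hyb ?Hb.
apply: (connect_trans (y := w)).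
  apply: IH => //; first exact: sub_forest Hsw Hf.
  by rewrite -ltnS; apply: leq_trans Hlt HN.
apply: connect1; apply/existsP; exists b; apply/existsP; exists a.
rewrite eq_sym Hab /is_root /w !ffunE eqxx /= eq_sym (negbTE Hab) Ha eqxx /=.
apply/eqP/ffunP => j; rewrite !ffunE; case: eqP => [->|_]; first by rewrite Hb.
by [].
Qed.

Lemma Rel_le y z : is_forest z -> Rel y z -> nap_le y z.
Proof. by move=> Hf; apply: (Rel_le_aux Hf (leqnn _)). Qed.

End Basics.
Section Repr.

Definition nonroots n (x : parent_fun n) := [set i | x i != None].
Definition inD n (x : parent_fun n) (S : {set 'I_n}) : bool :=
  (S \subset nonroots x) &&
  [forall c, forall p, (x c == Some p) ==> (p \in S) ==> (c \in S)].

Lemma inDP n (x : parent_fun n) (S : {set 'I_n}) :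
  reflect ((forall i, i \in S -> x i != None) /\
           (forall c p, x c = Some p -> p \in S -> c \in S)) (inD x S).
Proof.
apply: (iffP andP) => [[/subsetP H1 /forallP H2]|[H1 H2]]; split.
- by move=> i /H1; rewrite inE.
- by move=> c p Hc Hp; move: (H2 c) => /forallP /(_ p); rewrite Hc eqxx Hp.
- by apply/subsetP => i /H1; rewrite inE.
- apply/forallP => c; apply/forallP => p; apply/implyP => /eqP Hc; apply/implyP.
  exact: H2.
Qed.

Definition repr (P : fposet) n (x : parent_fun n) : Prop :=
  exists iota : fp_car P -> {set 'I_n},
   [/\ injective iota, forall a, inD x (iota a),
       (forall S, inD x S -> exists a, iota a = S)
     & forall a b, fp_le a b = (iota a \subset iota b)].

Definition supp n (y : parent_fun n) := [set i | y i != None].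
Definition cut n (x : parent_fun n) (S : {set 'I_n}) : parent_fun n :=
  [ffun i => if i \in S then x i else None].

Lemma Rel_cut n (x y : parent_fun n) : Rel y x -> y = cut x (supp y).
Proof.
move=> [H1 _]; apply/ffunP => i; rewrite ffunE inE.
by case: (H1 i) => ->; rewrite ?eqxx //; case: (x i).
Qed.

Lemma inD_Rel n (x : parent_fun n) (S : {set 'I_n}) : inD x S -> Rel (cut x S) x.
Proof.
move=> /inDP [H1 H2]; split.
  by move=> i; rewrite ffunE; case: ifP; [right|left].
move=> c p; rewrite !ffunE; case: ifP => Hc; first by move=> ->.
move=> _ Hx; case: ifP => // Hp; by rewrite (H2 _ _ Hx Hp) in Hc.
Qed.

Lemma supp_cut n (x : parent_fun n) (S : {set 'I_n}) : inD x S -> supp (cut x S) = S.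
Proof.
move=> /inDP [H1 _]; apply/setP => i; rewrite inE ffunE.
by case: ifP => [/H1 //|]; rewrite eqxx.
Qed.

Lemma Rel_inD n (x y : parent_fun n) : Rel y x -> inD x (supp y).
Proof.
move=> [H1 H2]; apply/inDP; split.
  by move=> i; rewrite inE; case: (H1 i) => [->|<-]; rewrite ?eqxx.
move=> c p Hc; rewrite !inE; apply: contraNN => /eqP Hyc.
by rewrite (H2 _ _ Hyc Hc).
Qed.

Lemma Rel_int n (x y : parent_fun n) : is_forest x -> Rel y x ->
  [&& is_forest y, nap_le (fzero _) y & nap_le y x].
Proof.
move=> Hf HR.
have Hfy : is_forest y by apply: sub_forest HR.1 Hf.
rewrite Hfy (Rel_le Hf HR) andbT /=.
apply: Rel_le => //; split; first by move=> i; left; rewrite ffunE.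
by move=> c p _ _; rewrite ffunE.
Qed.

Lemma repr_int (t : rtree) : repr (fp_int t) (rt_par t).
Proof.
set x := rt_par t.
have Hf : is_forest x by case/andP: (rt_isTree t).
have HR : forall a : int_car t, Rel (val a) x.
  by move=> a; case/and3P: (valP a) => _ _; apply: le_Rel.
exists (fun a => supp (val a)); split.
- move=> a b E; apply: val_inj.
  by rewrite (Rel_cut (HR a)) (Rel_cut (HR b)) E.
- by move=> a; apply: Rel_inD.
- move=> S HS.
  have Hc := Rel_int Hf (inD_Rel HS).
  by exists (Sub (cut x S) Hc); rewrite SubK supp_cut.
- move=> a b /=; apply/idP/idP.
    move/le_Rel => [H1 _]; apply/subsetP => i; rewrite !inE.
    by case: (H1 i) => [->|<-].
  move/subsetP => Hs; apply: Rel_le.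
    by case/and3P: (valP b).
  split.
    move=> i; case E: (val a i) => [v|]; last by left.
    have : i \in supp (val a) by rewrite inE E.
    move/Hs; rewrite inE => Hb; right.
    case: ((HR b).1 i) Hb => [->//|->] _.
    by case: ((HR a).1 i) E => [->//|->].
  move=> c p Hc Hb.
  apply: (HR a).2 Hc _.
  by case: ((HR b).1 c) Hb => [->//|<-].
Qed.

Lemma repr_prod1 (P : fposet) n (x : parent_fun n) :
  repr P x -> repr (fp_prod P fp_one) x.
Proof.
case=> iota [Hi Hd Hs Ho]; exists (fun ab => iota ab.1); split.
- by move=> [a []] [b []] /= /Hi ->.
- by move=> ab; apply: Hd.
- by move=> S /Hs [a Ha]; exists (a, tt).
- by move=> [a []] [b []] /=; rewrite andbT Ho.
Qed.

Lemma repr_iso (P P' : fposet) n (x : parent_fun n) :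
  repr P x -> repr P' x -> fp_iso P P'.
Proof.
case=> i [Hi Hd Hs Ho]; case=> j [Hj Hd' Hs' Ho'].
have Hf : forall a, exists b, (fun b => j b == i a) b.
  by move=> a; case: (Hs' _ (Hd a)) => b Hb; exists b; apply/eqP.
have Hg : forall b, exists a, (fun a => i a == j b) a.
  by move=> b; case: (Hs _ (Hd' b)) => a Ha; exists a; apply/eqP.
pose f a := xchoose (Hf a).
pose g b := xchoose (Hg b).
have Ef : forall a, j (f a) = i a by move=> a; apply/eqP; apply: (xchooseP (Hf a)).
have Eg : forall b, i (g b) = j b by move=> b; apply/eqP; apply: (xchooseP (Hg b)).
exists f; split.
  by exists g => [a|b]; [apply: Hi; rewrite Eg Ef | apply: Hj; rewrite Ef Eg].
by move=> a b; rewrite Ho Ho' !Ef.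
Qed.

Definition x1 : parent_fun 1 := [ffun _ => None].

Lemma x1_tree : is_tree x1.
Proof.
apply/andP; split; first by apply/forallP => i; rewrite /= ffunE.
apply/eqP; apply: (@eq_card1 _ ord0) => i; rewrite !inE /is_root ffunE eqxx.
by rewrite ord1 eqxx.
Qed.

Lemma repr_one : repr fp_one x1.
Proof.
exists (fun _ => set0); split.
- by move=> [] [] _.
- by move=> _; apply/inDP; split=> [i|c p]; rewrite inE.
- move=> S /inDP [H1 _]; exists tt; apply/setP => i; rewrite inE.
  by apply/esym/negP => /H1; rewrite ffunE eqxx.
- by move=> a b; rewrite sub0set.
Qed.

End Repr.
Section Depth.
Variable n : nat.
Implicit Types x : parent_fun n.

Definition depth x v := \sum_(0 <= j < n) (iter j.+1 (step x) (Some v) != None).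

Lemma sum_shiftb N (F : nat -> bool) : 0 < N -> F 0 -> ~~ F N ->
  \sum_(0 <= j < N) F j = (\sum_(0 <= j < N) F j.+1).+1.
Proof.
case: N => // N _ H0 HN.
rewrite big_nat_recl // big_nat_recr //= H0 (negbTE HN) addn0 add1n.
by [].
Qed.

Lemma depth_par x v p : is_forest x -> x v = Some p -> depth x v = (depth x p).+1.
Proof.
move=> Hf Hv; rewrite /depth.
under eq_bigr => j _ do rewrite itS Hv.
apply: sum_shiftb => //; first exact: (leq_ltn_trans (leq0n _) (ltn_ord v)).
by rewrite forest_ge.
Qed.

Lemma depth_root x r : x r = None -> depth x r = 0.
Proof.
move=> Hr; rewrite /depth big1_seq // => j _.
by rewrite itS Hr iter_None.
Qed.

Lemma depth_lt x v : is_forest x -> depth x v < n.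
Proof.
move=> Hf; rewrite /depth.
have Hn : 0 < n by exact: (leq_ltn_trans (leq0n _) (ltn_ord v)).
case: n Hn x v Hf => // m _ x v Hf.
rewrite big_nat_recr // (forest_ge (k:=m.+1)) // eqxx /= addn0 ltnS.
apply: (@leq_trans (\sum_(0 <= j < m) 1)).
  by apply: leq_sum => j _; apply: leq_b1.
by rewrite sum_nat_const_nat subn0 muln1.
Qed.

Lemma height_forest x (h : 'I_n -> nat) :
  (forall v, h v < n) -> (forall v p, x v = Some p -> h p < h v) -> is_forest x.
Proof.
move=> Hb Hd.
have H : forall k v w, iter k (step x) (Some v) = Some w -> h w + k <= h v.
  elim=> [v w [->]|k IH v w]; first by rewrite addn0.
  rewrite itS; case E: (x v) => [p|]; last by rewrite iter_None.
  move/IH => Hle; rewrite addnS; exact: leq_ltn_trans Hle (Hd _ _ E).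
apply/forallP => v; apply/eqP.
case E: (iter n (step x) (Some v)) => [w|//].
have := H _ _ _ E; have := Hb v => Hl Hle.
have := leq_ltn_trans Hle Hl; by rewrite ltnNge leq_addl.
Qed.

Lemma tree_root_uniq x r r' : is_tree x -> x r = None -> x r' = None -> r = r'.
Proof.
case/andP => _ /eqP Hc Hr Hr'.
have : #|[pred r | is_root x r]| <= 1 by rewrite Hc.
move/card_le1_eqP; apply; rewrite inE /is_root; by apply/eqP.
Qed.

Lemma tree_has_root x : is_tree x -> exists r, x r = None.
Proof.
case/andP => _ /eqP Hc.
have : 0 < #|[pred r | is_root x r]| by rewrite Hc.
by case/card_gt0P => r; rewrite inE /is_root => /eqP; exists r.
Qed.

End Depth.

Section Merge.
Variables (n1 n2 : nat) (x : parent_fun n1) (r1 : 'I_n1)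
  (y : parent_fun n2.+1) (r2 : 'I_n2.+1).
Hypotheses (Hx : is_tree x) (Hr1 : x r1 = None) (Hy : is_tree y) (Hr2 : y r2 = None).

Definition mpar (k : 'I_(n1 + n2)) : option 'I_(n1 + n2) :=
  match split k with
  | inl i => omap (lshift n2) (x i)
  | inr k' => match y (lift r2 k') with
              | None => None
              | Some p => match unlift r2 p with
                          | None => Some (lshift n2 r1)
                          | Some q => Some (rshift n1 q)
                          end
              end
  end.
Definition merge : parent_fun (n1 + n2) := [ffun k => mpar k].

Lemma split_l (i : 'I_n1) : split (lshift n2 i) = inl i.
Proof. exact: (unsplitK (inl _ i)). Qed.
Lemma split_r (k : 'I_n2) : split (rshift n1 k) = inr k.
Proof. exact: (unsplitK (inr _ k)). Qed.

Lemma merge_l i : merge (lshift n2 i) = omap (lshift n2) (x i).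
Proof. by rewrite ffunE /mpar split_l. Qed.

Lemma merge_r k : merge (rshift n1 k) =
  match y (lift r2 k) with
  | None => None
  | Some p => match unlift r2 p with
              | None => Some (lshift n2 r1)
              | Some q => Some (rshift n1 q)
              end
  end.
Proof. by rewrite ffunE /mpar split_r. Qed.

Lemma ord_split (P : 'I_(n1 + n2) -> Prop) :
  (forall i, P (lshift n2 i)) -> (forall k, P (rshift n1 k)) -> forall k, P k.
Proof. by move=> H1 H2 k; rewrite -(splitK k); case: (split k). Qed.

Lemma y_nonroot k : y (lift r2 k) != None.
Proof.
apply/eqP => E; have := tree_root_uniq Hy Hr2 E => /eqP.
by rewrite (negbTE (neq_lift _ _)).
Qed.

Lemma lr_neq i k : lshift n2 i != rshift n1 k.
Proof.
apply/eqP => /(congr1 val) /= E.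
by have := ltn_ord i; rewrite E ltnNge leq_addr.
Qed.

Lemma merge_tree : is_tree merge.
Proof.
have Hfx : is_forest x by case/andP: Hx.
have Hfy : is_forest y by case/andP: Hy.
apply/andP; split.
  pose h k := match split k with inl i => depth x i | inr k' => depth y (lift r2 k') end.
  apply: (height_forest (h := h)).
    apply: ord_split => [i|k]; rewrite /h ?split_l ?split_r.
      by apply: leq_trans (depth_lt _ Hfx) _; rewrite leq_addr.
    apply: leq_trans (depth_lt _ Hfy) _.
    by rewrite /= -addn1 [n1 + n2]addnC leq_add2l (leq_ltn_trans (leq0n _) (ltn_ord r1)).
  apply: ord_split => [i|k] p.
    rewrite merge_l; case E: (x i) => [j|] //= [<-].
    by rewrite /h !split_l (depth_par Hfx E).
  rewrite merge_r; case E: (y (lift r2 k)) => [q|//].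
  rewrite /h split_r (depth_par Hfy E).
  case: unliftP => [q' ->|->] [<-].
    by rewrite split_r.
  by rewrite split_l (depth_root Hr1) (depth_root Hr2).
apply/eqP; apply: (@eq_card1 _ (lshift n2 r1)); apply: ord_split => [i|k].
  rewrite !inE /is_root merge_l (inj_eq (@lshift_inj _ _)).
  case E: (x i) => [j|] /=.
    by apply/esym/eqP => Ei; rewrite Ei Hr1 in E.
  by rewrite (tree_root_uniq Hx E Hr1) !eqxx.
rewrite !inE /is_root merge_r [rshift _ _ == _]eq_sym (negbTE (lr_neq _ _)).
case E: (y (lift r2 k)) => [q|]; last by have := y_nonroot k; rewrite E.
by case: (unlift r2 q).
Qed.

Definition theta (S1 : {set 'I_n1}) (S2 : {set 'I_n2.+1}) : {set 'I_(n1 + n2)} :=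
  [set k | match split k with inl i => i \in S1 | inr k' => lift r2 k' \in S2 end].

Lemma theta_l S1 S2 i : (lshift n2 i \in theta S1 S2) = (i \in S1).
Proof. by rewrite inE split_l. Qed.
Lemma theta_r S1 S2 k : (rshift n1 k \in theta S1 S2) = (lift r2 k \in S2).
Proof. by rewrite inE split_r. Qed.

Lemma r2_notin S2 : inD y S2 -> r2 \notin S2.
Proof. by case/inDP => H _; apply/negP => /H; rewrite Hr2. Qed.

Lemma r1_notin S1 : inD x S1 -> r1 \notin S1.
Proof. by case/inDP => H _; apply/negP => /H; rewrite Hr1. Qed.

Lemma theta_sub S1 S2 T1 T2 : inD y S2 ->
  (theta S1 S2 \subset theta T1 T2) = (S1 \subset T1) && (S2 \subset T2).
Proof.
move=> HS2; apply/idP/idP.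
  move/subsetP => H; apply/andP; split; apply/subsetP.
    by move=> i Hi; have := H (lshift n2 i); rewrite !theta_l; apply.
  move=> v Hv; case: (unliftP r2 v) => [k Ek|Ev].
    by have := H (rshift n1 k); rewrite !theta_r -Ek; apply.
  by move: Hv; rewrite Ev (negbTE (r2_notin HS2)).
case/andP => /subsetP H1 /subsetP H2; apply/subsetP; apply: ord_split => [i|k].
  by rewrite !theta_l; apply: H1.
by rewrite !theta_r; apply: H2.
Qed.

Lemma theta_inD S1 S2 : inD x S1 -> inD y S2 -> inD merge (theta S1 S2).
Proof.
move=> HS1 HS2; have H1 := HS1; have H2 := HS2.
case/inDP: H1 => A1 B1; case/inDP: H2 => A2 B2.
apply/inDP; split.
  apply: ord_split => [i|k].
    by rewrite theta_l merge_l => /A1; case: (x i).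
  by rewrite theta_r merge_r => /A2; case: (y (lift r2 k)) => // q _; case: (unlift r2 q).
apply: ord_split => [i|k] p.
  rewrite merge_l; case E: (x i) => [j|] //= [<-].
  by rewrite !theta_l; apply: B1.
rewrite merge_r; case E: (y (lift r2 k)) => [q|//].
case: unliftP => [q' Eq|Eq] [<-].
  by rewrite !theta_r -Eq; apply: B2.
by rewrite theta_l (negbTE (r1_notin HS1)).
Qed.

Lemma theta_surj S : inD merge S ->
  exists S1 S2, [/\ inD x S1, inD y S2 & theta S1 S2 = S].
Proof.
case/inDP => A B.
exists [set i | lshift n2 i \in S].
exists [set v | if unlift r2 v is Some k then rshift n1 k \in S else false].
split.
- apply/inDP; split.
    by move=> i; rewrite inE => /A; rewrite merge_l; case: (x i).
  move=> c p Hc; rewrite !inE; apply: B.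
  by rewrite merge_l Hc.
- apply/inDP; split.
    move=> v; rewrite inE; case: unliftP => // k -> /A.
    by rewrite merge_r; case: (y (lift r2 k)).
  move=> c p Hc; rewrite !inE.
  case: (unliftP r2 p) => // p' Ep Hp.
  case: (unliftP r2 c) => [c' Ec|Ec]; last by rewrite Ec Hr2 in Hc.
  apply: B Hp; rewrite merge_r -Ec Hc.
  by rewrite Ep liftK.
- apply/setP; apply: ord_split => [i|k].
    by rewrite theta_l inE.
  by rewrite theta_r inE liftK.
Qed.

Lemma repr_merge (P P' : fposet) : repr P x -> repr P' y -> repr (fp_prod P P') merge.
Proof.
case=> i [Hi Hd Hs Ho]; case=> j [Hj Hd' Hs' Ho'].
exists (fun ab => theta (i ab.1) (j ab.2)); split.
- move=> [a b] [a' b'] /= E.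
  have E1 : i a = i a'.
    by apply/setP => v; move: (congr1 (fun S : {set 'I_(n1 + n2)} => lshift n2 v \in S) E) => /=; rewrite !theta_l.
  have E2 : j b = j b'.
    apply/setP => v; case: (unliftP r2 v) => [k ->|->].
      by move: (congr1 (fun S : {set 'I_(n1 + n2)} => rshift n1 k \in S) E) => /=; rewrite !theta_r.
    by rewrite (negbTE (r2_notin (Hd' b))) (negbTE (r2_notin (Hd' b'))).
  by rewrite (Hi _ _ E1) (Hj _ _ E2).
- by move=> [a b]; apply: theta_inD.
- move=> S /theta_surj [S1 [S2 [H1 H2 <-]]].
  case: (Hs _ H1) => a <-; case: (Hs' _ H2) => b <-.
  by exists (a, b).
- by move=> [a b] [a' b'] /=; rewrite theta_sub // Ho Ho'.
Qed.

End Merge.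
Section TreeFacts.
Variables (n : nat) (x : parent_fun n).
Hypothesis Hf : is_forest x.

Definition ancp v w := exists k, iter k (step x) (Some v) = Some w.
Definition E (v : 'I_n) : {set 'I_n} :=
  [set w | [exists k : 'I_n, iter k (step x) (Some w) == Some v]].

Lemma EP v w : reflect (ancp w v) (w \in E v).
Proof.
rewrite inE; apply: (iffP existsP) => [[k /eqP H]|[k H]]; first by exists k.
by exists (Ordinal (forest_lt Hf H)); apply/eqP.
Qed.

Lemma ancp_refl v : ancp v v. Proof. by exists 0. Qed.

Lemma ancp_trans u v w : ancp u v -> ancp v w -> ancp u w.
Proof. by move=> [j Hj] [k Hk]; exists (k + j); rewrite iterD Hj. Qed.

Lemma ancp_par v p : x v = Some p -> ancp v p.
Proof. by move=> H; exists 1; rewrite /= H. Qed.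

Lemma ancp_antisym v w : ancp v w -> ancp w v -> v = w.
Proof.
move=> [j Hj] [k Hk].
case: (posnP (k + j)) => [/eqP|Hpos].
  by rewrite addn_eq0 => /andP [/eqP Ek /eqP Ej]; move: Hj; rewrite Ej => [[]].
have := iterD k j (step x) (Some v); rewrite Hj Hk.
by rewrite -(prednK Hpos) => H; case: (acyc Hf H).
Qed.

Lemma ancp_nonroot v w : x v != None -> ancp w v -> x w != None.
Proof.
move=> Hv [[|k] H]; first by case: H => ->.
by move: H; rewrite itS; case: (x w) => //; rewrite iter_None.
Qed.

Lemma E_inD v : x v != None -> inD x (E v).
Proof.
move=> Hv; apply/inDP; split.
  by move=> w /EP; apply: ancp_nonroot.
move=> c p Hc /EP Hp; apply/EP.
by apply: ancp_trans (ancp_par Hc) Hp.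
Qed.

Lemma E_subP v w : reflect (ancp v w) (E v \subset E w).
Proof.
apply: (iffP idP).
  by move/subsetP => /(_ v (introT (EP _ _) (ancp_refl v))) /EP H.
move=> H; apply/subsetP => u /EP Hu; apply/EP.
exact: ancp_trans Hu H.
Qed.

Lemma E_inj v w : E v = E w -> v = w.
Proof.
move=> H; apply: ancp_antisym; apply/E_subP; by rewrite H subxx.
Qed.

Lemma closure S v w : inD x S -> v \in S -> ancp w v -> w \in S.
Proof.
case/inDP => _ B Hv [k Hk]; elim: k w Hk => [w [->]//|k IH w].
rewrite itS; case E1: (x w) => [p|]; last by rewrite iter_None.
by move/IH => Hp; apply: B E1 Hp.
Qed.

Definition JI (S : {set 'I_n}) :=
  exists S', [/\ inD x S', S' \proper S & forall T, inD x T -> T \proper S -> T \subset S'].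

Lemma E_JI v : x v != None -> JI (E v).
Proof.
move=> Hv; have HvE : v \in E v by apply/EP/ancp_refl.
exists (E v :\ v); split.
- have /inDP [A B] := E_inD Hv; apply/inDP; split.
    by move=> i /setD1P [_ /A].
  move=> c p Hc /setD1P [Hpv Hp]; apply/setD1P; split; last exact: B Hc Hp.
  apply/eqP => Ec; move: Hc; rewrite Ec => Hc.
  move/EP: Hp => [k Hk].
  by apply: (acyc (k := k) (v := v) Hf); rewrite itS Hc.
- exact: properD1.
- move=> T HT HTp; apply/subsetP => w Hw; apply/setD1P; split.
    apply/eqP => Ew; rewrite Ew in Hw.
    have : E v \subset T by apply/subsetP => u /EP Hu; apply: closure HT Hw Hu.
    by rewrite properE in HTp; case/andP: HTp => _ /negP.
  by move/proper_sub/subsetP: HTp; apply.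
Qed.

Lemma top S s : inD x S -> s \in S ->
  exists m a, [/\ m \in S, ancp s m, x m = Some a & a \notin S].
Proof.
move=> HS Hs; have HS' := HS; case/inDP: HS' => A B.
set y := cut x S.
have Hsub : subpf y x by move=> i; rewrite /y ffunE; case: ifP; [right|left].
have Hfy : is_forest y := sub_forest Hsub Hf.
have Hys : y s != None by rewrite /y ffunE Hs; apply: A.
have [b [a [[k Hk] Hb Ha]]] := descent Hfy Hys.
have HbS : b \in S by move: Hb; rewrite /y ffunE; case: ifP.
exists b, a; split => //.
- by exists k; apply: sub_iter Hsub Hk.
- by move: Hb; rewrite /y ffunE HbS.
- apply/negP => HaS; move: Ha; rewrite /y ffunE HaS => /eqP; apply/negP.
  exact: A.
Qed.

Lemma remove_top S m a : inD x S -> m \in S -> x m = Some a -> a \notin S ->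
  inD x (S :\ m).
Proof.
case/inDP => A B Hm Hx Ha; apply/inDP; split.
  by move=> i /setD1P [_ /A].
move=> c p Hc /setD1P [Hpm Hp]; apply/setD1P; split; last exact: B Hc Hp.
apply/eqP => Ec; move: Hc; rewrite Ec Hx => [[Ep]].
by rewrite Ep Hp in Ha.
Qed.

Lemma JI_E S : inD x S -> JI S -> exists v, x v != None /\ S = E v.
Proof.
move=> HS [S' [HS' Hp Hmax]].
have [s Hs] : exists s, s \in S.
  move: Hp; rewrite properE => /andP [_ /subsetPn [s Hs _]]; by exists s.
have [m [a [Hm Hsm Hxm Ha]]] := top HS Hs.
have Hm' : S :\ m \subset S' by apply: Hmax; [exact: remove_top Hxm Ha|exact: properD1].
have HmN : x m != None by rewrite Hxm.
exists m; split => //.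
apply/eqP; rewrite eqEsubset; apply/andP; split; last first.
  by apply/subsetP => w /EP Hw; apply: closure HS Hm Hw.
apply/subsetP => s' Hs'; case: (boolP (s' \in E m)) => // Hn; exfalso.
have [m' [a' [Hm2 Hsm' Hxm' Ha']]] := top HS Hs'.
have Hmm : m' != m.
  by apply/eqP => E1; move/negP: Hn; apply; apply/EP; rewrite -E1.
have Hm2' : S :\ m' \subset S' by apply: Hmax; [exact: remove_top Hxm' Ha'|exact: properD1].
have : S \subset S'.
  apply/subsetP => z Hz; case: (eqVneq z m) => [Ez|Nz].
    by apply: (subsetP Hm2'); apply/setD1P; split => //; rewrite Ez eq_sym.
  by apply: (subsetP Hm'); apply/setD1P.
by move: Hp; rewrite properE => /andP [_ /negP].
Qed.

Lemma ancp_max v p w : x v = Some p -> x p = None -> ancp v w -> w = v \/ w = p.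
Proof.
move=> Hv Hp [[|[|k]] Hk]; first by case: Hk; left.
  by move: Hk; rewrite /= Hv => [[]]; right.
by move: Hk; rewrite itS Hv itS Hp iter_None.
Qed.

Lemma ancp_next v p w : x v = Some p -> ancp v w -> w != v -> ancp p w.
Proof.
move=> Hv [[|k] Hk] Hne; first by case: Hk => E1; rewrite E1 eqxx in Hne.
by exists k; move: Hk; rewrite itS Hv.
Qed.

End TreeFacts.
Section Transfer.
Variables (n m : nat) (x : parent_fun n) (x' : parent_fun m) (r : 'I_n) (r' : 'I_m).
Hypotheses (Hx : is_tree x) (Hx' : is_tree x') (Hr : x r = None) (Hr' : x' r' = None).
Variable psi : {set 'I_n} -> {set 'I_m}.
Hypotheses (Hpd : forall S, inD x S -> inD x' (psi S))
  (Hpo : forall S T, inD x S -> inD x T -> (S \subset T) = (psi S \subset psi T))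
  (Hps : forall S', inD x' S' -> exists S, inD x S /\ psi S = S').

Let Hf : is_forest x. Proof. by case/andP: Hx. Qed.
Let Hf' : is_forest x'. Proof. by case/andP: Hx'. Qed.

Lemma psi_proper S T : inD x S -> inD x T -> (S \proper T) = (psi S \proper psi T).
Proof. by move=> HS HT; rewrite !properE -!Hpo. Qed.

Lemma psi_inj S T : inD x S -> inD x T -> psi S = psi T -> S = T.
Proof.
move=> HS HT E1; apply/eqP; rewrite eqEsubset !Hpo // E1 subxx //.
Qed.

Lemma JI_psi S : inD x S -> JI x S -> JI x' (psi S).
Proof.
move=> HS [S' [H1 H2 H3]]; exists (psi S'); split.
- exact: Hpd.
- by rewrite -psi_proper.
- move=> T' HT' HTp; have [T [HT ET]] := Hps HT'.
  rewrite -ET -Hpo //; apply: H3 => //; by rewrite psi_proper // ET.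
Qed.

Lemma JI_psi_inv S : inD x S -> JI x' (psi S) -> JI x S.
Proof.
move=> HS [W' [H1 H2 H3]]; have [W [HW EW]] := Hps H1.
exists W; split => //.
- by rewrite psi_proper // EW.
- move=> T HT HTp; rewrite Hpo // EW; apply: H3; first exact: Hpd.
  by rewrite -psi_proper.
Qed.

Definition g (v : 'I_n) : 'I_m :=
  if x v != None then
    odflt r' [pick w | (x' w != None) && (psi (E x v) == E x' w)]
  else r'.

Lemma gP v : x v != None -> x' (g v) != None /\ psi (E x v) = E x' (g v).
Proof.
move=> Hv; rewrite /g Hv.
have HJ := JI_psi (E_inD Hf Hv) (E_JI Hf Hv).
have [w [Hw Ew]] := JI_E Hf' (Hpd (E_inD Hf Hv)) HJ.
case: pickP => [w' /andP [H1 /eqP H2]|H] //=.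
by have := H w; rewrite Hw Ew eqxx.
Qed.

Lemma g_root v : x v = None -> g v = r'.
Proof. by rewrite /g => ->. Qed.

Lemma g_nonroot_inj v w : x v != None -> x w != None -> g v = g w -> v = w.
Proof.
move=> Hv Hw E1; have [_ E2] := gP Hv; have [_ E3] := gP Hw.
apply: (E_inj Hf); apply: psi_inj; try exact: E_inD.
by rewrite E2 E3 E1.
Qed.

Lemma g_inj : injective g.
Proof.
move=> v w E1.
case: (eqVneq (x v) None) => Hv; case: (eqVneq (x w) None) => Hw.
- by rewrite (tree_root_uniq Hx Hv Hr) (tree_root_uniq Hx Hw Hr).
- have [H _] := gP Hw; by rewrite -E1 g_root // Hr' in H.
- have [H _] := gP Hv; by rewrite E1 g_root // Hr' in H.
- exact: g_nonroot_inj.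
Qed.

Lemma g_surj_nonroot w : x' w != None -> exists v, x v != None /\ g v = w.
Proof.
move=> Hw.
have [S [HS ES]] := Hps (E_inD Hf' Hw).
have HJ : JI x S by apply: JI_psi_inv => //; rewrite ES; apply: E_JI.
have [v [Hv ESv]] := JI_E Hf HS HJ.
exists v; split => //; have [_ E2] := gP Hv.
by apply: (E_inj Hf'); rewrite -E2 -ES ESv.
Qed.

Lemma g_surj w : exists v, g v = w.
Proof.
case: (eqVneq (x' w) None) => Hw.
  by exists r; rewrite g_root // (tree_root_uniq Hx' Hw Hr').
by have [v [_ <-]] := g_surj_nonroot Hw; exists v.
Qed.

Lemma g_bij : bijective g.
Proof.
pose h w := odflt r [pick v | g v == w].
exists h => [v|w]; rewrite /h.
  case: pickP => [v' /eqP /g_inj //|H]; by have := H v; rewrite eqxx.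
case: pickP => [v' /eqP //|H]; have [v Hv] := g_surj w.
by have := H v; rewrite Hv eqxx.
Qed.

Lemma g_ord v w : x v != None -> x w != None ->
  ancp x v w <-> ancp x' (g v) (g w).
Proof.
move=> Hv Hw; have [Hgv Ev] := gP Hv; have [Hgw Ew] := gP Hw.
split.
  move/(E_subP Hf) => H; apply/(E_subP Hf').
  by rewrite -Ev -Ew -Hpo //; apply: E_inD.
move/(E_subP Hf') => H; apply/(E_subP Hf).
by rewrite Hpo ?Ev ?Ew //; apply: E_inD.
Qed.

Lemma g_par v : x' (g v) = omap g (x v).
Proof.
case Ev: (x v) => [p|] /=; last by rewrite g_root.
have Hv : x v != None by rewrite Ev.
have [Hgv _] := gP Hv.
case Eq: (x' (g v)) Hgv => [q|//] _.
case: (eqVneq (x p) None) => Hp.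
  rewrite g_root //.
  case: (eqVneq (x' q) None) => Hq; first by rewrite (tree_root_uniq Hx' Hq Hr').
  have [w [Hw Egw]] := g_surj_nonroot Hq.
  have : ancp x v w by apply/g_ord => //; rewrite Egw; apply: ancp_par Eq.
  case/(ancp_max Ev Hp) => Ew.
    by move: Eq; rewrite -Egw Ew => Eq; have := acyc (k := 0) Hf' (v := g v); rewrite /= Eq; case.
  by rewrite Ew Hp in Hw.
have Hvp : v != p.
  apply/eqP => E1; move: Ev; rewrite -E1 => Ev.
  by have := acyc (k := 0) Hf (v := v); rewrite /= Ev; case.
have Hgvp : g v != g p by apply: contra Hvp => /eqP /g_inj ->.
have Hanc : ancp x' (g v) (g p) by apply/g_ord => //; apply: ancp_par Ev.
have Hqp : ancp x' q (g p) by apply: ancp_next Eq Hanc _; rewrite eq_sym.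
have [Hgp _] := gP Hp.
case: (eqVneq (x' q) None) => Hq.
  have := ancp_nonroot Hgp Hqp; by rewrite Hq.
have [w [Hw Egw]] := g_surj_nonroot Hq.
have Hvw : ancp x v w by apply/g_ord => //; rewrite Egw; apply: ancp_par Eq.
have Hwv : w != v.
  apply/eqP => E1; move: Eq; rewrite -Egw E1 => Eq.
  by have := acyc (k := 0) Hf' (v := g v); rewrite /= Eq; case.
have Hpw : ancp x p w := ancp_next Ev Hvw Hwv.
have : ancp x' (g p) q by rewrite -Egw; apply/g_ord.
by move=> H; rewrite (ancp_antisym Hf' Hqp H).
Qed.

End Transfer.
Lemma psi_of_iso (P P' : fposet) n m (x : parent_fun n) (x' : parent_fun m) :
  repr P x -> repr P' x' -> fp_iso P P' ->
  exists psi : {set 'I_n} -> {set 'I_m},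
    [/\ forall S, inD x S -> inD x' (psi S),
        forall S T, inD x S -> inD x T -> (S \subset T) = (psi S \subset psi T)
      & forall S', inD x' S' -> exists S, inD x S /\ psi S = S'].
Proof.
case=> i [Hi Hd Hs Ho]; case=> j [Hj Hd' Hs' Ho'] [f [[f' Hff' Hf'f] Hfo]].
pose psi S := if [pick a | i a == S] is Some a then j (f a) else set0.
have Hpsi : forall a, psi (i a) = j (f a).
  move=> a; rewrite /psi; case: pickP => [a' /eqP /Hi -> //|H].
  by have := H a; rewrite eqxx.
exists psi; split.
- by move=> S /Hs [a <-]; rewrite Hpsi.
- by move=> S T /Hs [a <-] /Hs [b <-]; rewrite !Hpsi -Ho -Ho'.
- move=> S' /Hs' [b' <-]; exists (i (f' b')); split => //.
  by rewrite Hpsi Hf'f.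
Qed.

Lemma tree_iso_of (t u : rtree) :
  fp_iso (prodQ [:: t]) (prodQ [:: u]) -> tree_iso t u.
Proof.
move=> Hiso.
have R1 : repr (prodQ [:: t]) (rt_par t) by apply: repr_prod1; apply: repr_int.
have R2 : repr (prodQ [:: u]) (rt_par u) by apply: repr_prod1; apply: repr_int.
have [psi [Hpd Hpo Hps]] := psi_of_iso R1 R2 Hiso.
have Ht := rt_isTree t; have Hu := rt_isTree u.
have [r Hr] := tree_has_root Ht; have [r' Hr'] := tree_has_root Hu.
exists (g (rt_par t) (rt_par u) r' psi); split.
  exact: (g_bij Ht Hu Hr Hr' Hpd Hpo Hps).
by move=> i; apply: (g_par Ht Hu Hr Hr' Hpd Hpo Hps).
Qed.

Lemma no_tree0 (x : parent_fun 0) : ~~ is_tree x.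
Proof.
apply/negP => /andP [_ /eqP Hc].
have : #|[pred r | is_root x r]| <= #|'I_0| by apply: max_card.
by rewrite Hc card_ord.
Qed.

Lemma exists_tree Q : exists t : rtree, repr (prodQ Q) (rt_par t).
Proof.
elim: Q => [|t1 Q [t' IH]].
  by exists (RTree x1_tree); apply: repr_one.
move: IH; case: t' => [[|n2] y Hy] IH; first by have := no_tree0 y; rewrite Hy.
have [r1 Hr1] := tree_has_root (rt_isTree t1).
have [r2 Hr2] := tree_has_root Hy.
exists (RTree (merge_tree (rt_isTree t1) Hr1 Hy Hr2)) => /=.
exact: repr_merge (repr_int t1) IH.
Qed.

Lemma Q_tree Q : exists t : rtree, fp_iso (prodQ Q) (prodQ [:: t]).
Proof.
have [t Ht] := exists_tree Q; exists t; apply: repr_iso Ht _.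
by apply: repr_prod1; apply: repr_int.
Qed.

From Stdlib Require Import IndefiniteDescription.
Unset Implicit Arguments.
Import GRing.Theory.
Local Open Scope ring_scope.

Theorem lemma6p9 (K : fieldType) (H : lmodType K) (F : seq rtree -> H)
  (F_iso : forall Q Q' : seq rtree, fp_iso (prodQ Q) (prodQ Q') -> F Q = F Q')
  (F_span : forall h : H, exists n (c : 'I_n -> K) (Qs : 'I_n -> seq rtree),
      h = \sum_(i < n) c i *: F (Qs i))
  (F_free : forall n (c : 'I_n -> K) (Qs : 'I_n -> seq rtree),
      (forall i j, i != j -> ~ fp_iso (prodQ (Qs i)) (prodQ (Qs j))) ->
      \sum_(i < n) c i *: F (Qs i) = 0 -> forall i, c i = 0) :
  (forall h : H, exists n (c : 'I_n -> K) (ts : 'I_n -> rtree),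
      h = \sum_(i < n) c i *: F [:: ts i]) /\
  (forall n (c : 'I_n -> K) (ts : 'I_n -> rtree),
      (forall i j, i != j -> ~ tree_iso (ts i) (ts j)) ->
      \sum_(i < n) c i *: F [:: ts i] = 0 -> forall i, c i = 0).
Proof.
split.
  move=> h; have [n [c [Qs ->]]] := F_span h.
  pose ts i := proj1_sig (constructive_indefinite_description _ (Q_tree (Qs i))).
  exists n, c, ts; apply: eq_bigr => i _; congr (_ *: _); apply: F_iso.
  exact: (proj2_sig (constructive_indefinite_description _ (Q_tree (Qs i)))).
move=> n c ts Hts Hsum.
apply: (F_free n c (fun i => [:: ts i])) => // i j Hij Hiso.
exact: (Hts i j Hij (tree_iso_of Hiso)).
Qed.
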